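(* Assume $\alpha>\beta+1$, $\beta\ge0$, $\theta>0$, and $\alpha-\beta-1<\frac{4\theta}{\beta+1}$. Let $\rho\in\mathbb R$ and let $w$ be the solution on $[0,\infty)$ of $L(w)+e^{w}=0$, $w(0)=\rho$, $w'(0)=0$, and let $w^*(s)=\ln\{\theta^{\beta+1}(\alpha-\beta-1)\}-\theta\ln s$, $s>0$. Then for every $R>0$, $w-w^*$ has infinitely many zeros on $(R,+\infty)$ and only finitely many zeros on $(0,R]$. In particular $w-w^*$ has infinitely many zeros on $(0,\infty)$.
   Context: $L(u)(r)=r^{-\gamma}(r^{\alpha}|u'(r)|^{\beta}u'(r))'$ and $\theta=\gamma+2+\beta-\alpha$. The function $w^*$ is a singular solution of $L(w)+e^w=0$ on $(0,\infty)$. *)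

(* Defs.v *)
From Stdlib Require Import Reals List.
From Coquelicot Require Import Coquelicot.
Open Scope R_scope.

Definition theta (alpha beta gamma : R) : R := gamma + 2 + beta - alpha.

(* The flux  r^alpha |u'(r)|^beta u'(r)  (for r > 0).  For beta >= 0,
   Rpower (Rabs d) beta * d equals |d|^beta d for every real d
   (when d = 0 both sides are 0). *)
Definition flux (alpha beta : R) (u : R -> R) (r : R) : R :=
  Rpower r alpha * (Rpower (Rabs (Derive u r)) beta * Derive u r).

(* w is a solution on [0,oo) of  L(w) + e^w = 0,  w(0) = rho,  w'(0) = 0,
   where L(u)(r) = r^{-gamma} (r^alpha |u'|^beta u')'.
   - w(0) = rho;
   - the right derivative of w at 0 exists and equals 0;
   - w is differentiable on (0,oo);
   - the flux r^alpha |w'|^beta w' is differentiable on (0,oo) and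
     r^{-gamma} (flux)'(r) + e^{w(r)} = 0 for r > 0. *)
Definition is_solution (alpha beta gamma rho : R) (w : R -> R) : Prop :=
  w 0 = rho /\
  filterlim (fun h => (w h - w 0) / h) (at_right 0) (locally 0) /\
  (forall r, 0 < r -> ex_derive w r) /\
  (forall r, 0 < r -> ex_derive (flux alpha beta w) r /\
     Rpower r (- gamma) * Derive (flux alpha beta w) r + exp (w r) = 0).

Definition wstar (alpha beta gamma : R) (s : R) : R :=
  ln (Rpower (theta alpha beta gamma) (beta + 1) * (alpha - beta - 1))
  - theta alpha beta gamma * ln s.

Definition finite_set (P : R -> Prop) : Prop :=
  exists l : list R, forall s, P s -> In s l.

(* Main.v *)
Require Import Defs.
From Stdlib Require Import Reals Lra List Classical.
From Coquelicot Require Import Coquelicot.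
Open Scope R_scope.
Module H1mod.
Implicit Types (f g df : R -> R) (x a b k y c : R).

Lemma D_ext f x a b : is_derive f x a -> a = b -> is_derive f x b.
Proof. intros H ->; exact H. Qed.
Lemma D_plus f g x a b : is_derive f x a -> is_derive g x b ->
  is_derive (fun t => f t + g t) x (a + b).
Proof. intros; now apply (is_derive_plus f g). Qed.
Lemma D_minus f g x a b : is_derive f x a -> is_derive g x b ->
  is_derive (fun t => f t - g t) x (a - b).
Proof. intros; now apply (is_derive_minus f g). Qed.
Lemma D_mult f g x a b : is_derive f x a -> is_derive g x b ->
  is_derive (fun t => f t * g t) x (a * g x + f x * b).
Proof. intros. apply (is_derive_mult f g); auto. intros; apply Rmult_comm. Qed.
Lemma D_comp f g x a b : is_derive f (g x) a -> is_derive g x b ->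
  is_derive (fun t => f (g t)) x (b * a).
Proof. intros; now apply (is_derive_comp f g). Qed.
Lemma D_const (k x : R) : is_derive (fun _ => k) x 0.
Proof. apply (is_derive_const k x). Qed.
Lemma D_id (x : R) : is_derive (fun t => t) x 1.
Proof. apply (is_derive_id x). Qed.
Lemma D_scal f x k a : is_derive f x a -> is_derive (fun t => k * f t) x (k * a).
Proof. apply is_derive_scal. Qed.
Lemma D_exp x : is_derive exp x (exp x).
Proof. apply is_derive_exp. Qed.
Lemma D_rpow x y : 0 < x -> is_derive (fun t => Rpower t y) x (y * Rpower x (y - 1)).
Proof. intros; apply is_derive_Reals; now apply derivable_pt_lim_power. Qed.
Lemma D_atan x : is_derive atan x (/ (1 + x^2)).
Proof. apply is_derive_Reals, derivable_pt_lim_atan. Qed.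

Lemma D_cont f x a : is_derive f x a -> continuity_pt f x.
Proof. intros H. apply continuity_pt_filterlim. apply (ex_derive_continuous f x). now exists a. Qed.

Lemma cont_eps f x : continuity_pt f x -> forall eps, 0 < eps ->
  exists delta, 0 < delta /\ forall y, Rabs (y - x) < delta -> Rabs (f y - f x) < eps.
Proof.
  intros H eps Heps. apply continuity_pt_filterlim in H.
  destruct (proj1 (filterlim_locally f (f x)) H (mkposreal eps Heps)) as [d Hd].
  exists d; split; [apply cond_pos|]. intros y Hy. apply (Hd y). exact Hy.
Qed.

Lemma mvt f df a b : a <= b -> (forall x, a <= x <= b -> is_derive f x (df x)) ->
  exists c, a <= c <= b /\ f b - f a = df c * (b - a).
Proof.
  intros Hab Hd. destruct (MVT_gen f a b df) as [c [Hc Heq]].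
  - intros x Hx. rewrite Rmin_left in Hx by lra. rewrite Rmax_right in Hx by lra. apply Hd; lra.
  - intros x Hx. rewrite Rmin_left in Hx by lra. rewrite Rmax_right in Hx by lra.
    apply (D_cont f x (df x)); apply Hd; lra.
  - exists c. rewrite Rmin_left in Hc by lra. rewrite Rmax_right in Hc by lra. auto.
Qed.

Lemma mono_le f df a b : a <= b -> (forall x, a <= x <= b -> is_derive f x (df x)) ->
  (forall x, a <= x <= b -> 0 <= df x) -> f a <= f b.
Proof.
  intros Hab Hd Hp. destruct (mvt f df a b Hab Hd) as [c [Hc He]].
  specialize (Hp c Hc). nra.
Qed.

Lemma anti_le f df a b : a <= b -> (forall x, a <= x <= b -> is_derive f x (df x)) ->
  (forall x, a <= x <= b -> df x <= 0) -> f b <= f a.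
Proof.
  intros Hab Hd Hp. destruct (mvt f df a b Hab Hd) as [c [Hc He]].
  specialize (Hp c Hc). nra.
Qed.

Lemma mono_lt f df a b : a < b -> (forall x, a <= x <= b -> is_derive f x (df x)) ->
  (forall x, a <= x <= b -> 0 < df x) -> f a < f b.
Proof.
  intros Hab Hd Hp. destruct (mvt f df a b (Rlt_le _ _ Hab) Hd) as [c [Hc He]].
  specialize (Hp c Hc). nra.
Qed.

Lemma mvt2 f df a b : (forall x, Rmin a b <= x <= Rmax a b -> is_derive f x (df x)) ->
  exists c, Rmin a b <= c <= Rmax a b /\ f b - f a = df c * (b - a).
Proof.
  intros Hd. destruct (Rle_dec a b) as [H|H].
  - rewrite Rmin_left, Rmax_right in * by lra. now apply mvt.
  - rewrite Rmin_right, Rmax_left in * by lra.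
    destruct (mvt f df b a) as [c [Hc He]]; try lra; auto.
    exists c; split; auto. lra.
Qed.

Lemma Rpower_pos x y : 0 < Rpower x y.
Proof. unfold Rpower; apply exp_pos. Qed.

Lemma exp_le x y : x <= y -> exp x <= exp y.
Proof. intros H; destruct (Rle_lt_or_eq_dec _ _ H) as [H'|H']; [apply Rlt_le, exp_increasing; auto| subst; lra]. Qed.
Lemma ln_le' x y : 0 < x -> x <= y -> ln x <= ln y.
Proof. intros Hx H; destruct (Rle_lt_or_eq_dec _ _ H) as [H'|H']; [apply Rlt_le, ln_increasing; auto| subst; lra]. Qed.
Lemma Rpower_le_neg a b y : y <= 0 -> 0 < a <= b -> Rpower b y <= Rpower a y.
Proof.
  intros Hy [Ha Hab]. unfold Rpower. apply exp_le.
  pose proof (ln_le' a b Ha Hab). nra.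
Qed.
Lemma Rpower_le_pos a b y : 0 <= y -> 0 < a <= b -> Rpower a y <= Rpower b y.
Proof.
  intros Hy [Ha Hab]. unfold Rpower. apply exp_le.
  pose proof (ln_le' a b Ha Hab). nra.
Qed.
Lemma Rpower_lt_pos a b y : 0 < y -> 0 < a < b -> Rpower a y < Rpower b y.
Proof.
  intros Hy [Ha Hab]. unfold Rpower. apply exp_increasing.
  pose proof (ln_increasing a b Ha Hab). nra.
Qed.
Lemma Rpower_1' x : 0 < x -> Rpower x 1 = x.
Proof. apply Rpower_1. Qed.
Lemma Rpower_inv_pow x m : 0 < x -> 0 < m -> Rpower (Rpower x m) (/ m) = x.
Proof. intros. rewrite Rpower_mult. rewrite Rinv_r by lra. now apply Rpower_1. Qed.
Lemma Rpower_pow_inv x m : 0 < x -> 0 < m -> Rpower (Rpower x (/ m)) m = x.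
Proof. intros. rewrite Rpower_mult. rewrite Rinv_l by lra. now apply Rpower_1. Qed.
Lemma Rpower_mult_l x y z : 0 < x -> 0 < y -> Rpower (x * y) z = Rpower x z * Rpower y z.
Proof. intros; now rewrite Rpower_mult_distr. Qed.
Lemma Rpower_1_base y : Rpower 1 y = 1.
Proof. unfold Rpower. rewrite ln_1, Rmult_0_r. apply exp_0. Qed.
Lemma Rpower_plus1 x y : 0 < x -> Rpower x (y + 1) = Rpower x y * x.
Proof. intros. rewrite Rpower_plus, Rpower_1; auto. Qed.
Lemma abs_le x a : Rabs x <= a -> -a <= x <= a.
Proof. unfold Rabs; destruct (Rcase_abs x); lra. Qed.
Lemma abs_lt x a : Rabs x < a -> -a < x < a.
Proof. unfold Rabs; destruct (Rcase_abs x); lra. Qed.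
Lemma le_abs x a : -a <= x <= a -> Rabs x <= a.
Proof. unfold Rabs; destruct (Rcase_abs x); lra. Qed.
Lemma lt_abs x a : -a < x < a -> Rabs x < a.
Proof. unfold Rabs; destruct (Rcase_abs x); lra. Qed.

Lemma dec_inf (E : R -> R) : (forall t, 0 <= E t) ->
  exists L, 0 <= L /\ (forall t, 0 <= t -> L <= E t) /\
    (forall eps, 0 < eps -> exists T, 0 <= T /\ E T < L + eps).
Proof.
  intros HE.
  set (S := fun y => exists t, 0 <= t /\ y = - E t).
  assert (Hb : bound S). { exists 0. intros y [t [Ht ->]]. specialize (HE t). lra. }
  assert (Hne : exists y, S y). { exists (- E 0). exists 0; split; [lra|auto]. }
  destruct (completeness S Hb Hne) as [M [HM1 HM2]].
  exists (- M). split; [|split].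
  - assert (M <= 0); [|lra]. apply HM2. intros y [t [Ht ->]]. specialize (HE t). lra.
  - intros t Ht. assert (- E t <= M); [|lra]. apply HM1. exists t; auto.
  - intros eps Heps. apply NNPP; intros Hn.
    assert (M <= M - eps); [|lra]. apply HM2. intros y [t [Ht ->]].
    destruct (Rle_dec (- E t) (M - eps)); auto. exfalso; apply Hn. exists t; split; auto; lra.
Qed.

Lemma barbalat (E dE phi dphi : R -> R) kappa M : 0 < kappa -> 0 < M ->
  (forall t, 0 <= E t) -> (forall t, 0 <= t -> is_derive E t (dE t)) ->
  (forall t, 0 <= t -> dE t <= - kappa * phi t) -> (forall t, 0 <= phi t) ->
  (forall t, 0 <= t -> is_derive phi t (dphi t)) -> (forall t, 0 <= t -> Rabs (dphi t) <= M) ->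
  forall eps, 0 < eps -> exists T, 0 <= T /\ forall t, T <= t -> phi t < eps.
Proof.
  intros Hk HM HE0 HE HdE Hphi0 Hphi HdM eps Heps.
  destruct (dec_inf E HE0) as [L [HL0 [HL1 HL2]]].
  set (d := eps / (2 * M)).
  assert (Hd : 0 < d) by (unfold d; apply Rdiv_lt_0_compat; lra).
  destruct (HL2 (kappa * eps * d / 2)) as [T [HT0 HT]].
  { apply Rdiv_lt_0_compat; [|lra]. apply Rmult_lt_0_compat; [nra|auto]. }
  exists T; split; auto. intros t Ht. apply Rnot_le_lt; intros Hpt.
  assert (Hdec : forall a b, 0 <= a <= b -> E b <= E a).
  { intros a b Hab. apply (anti_le E dE a b); try lra. intros; apply HE; lra.
    intros x Hx. specialize (HdE x ltac:(lra)). specialize (Hphi0 x). nra. }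
  assert (Hlow : forall s, t <= s <= t + d -> eps / 2 <= phi s).
  { intros s Hs. destruct (mvt phi dphi t s) as [xi [Hxi Heq]]; try lra.
    intros x Hx; apply Hphi; lra.
    specialize (HdM xi ltac:(lra)). apply abs_le in HdM.
    assert (M * d = eps / 2) by (unfold d; field; lra).
    assert (dphi xi * (s - t) >= - M * (s - t)) by nra. nra. }
  destruct (mvt E dE t (t + d)) as [xi [Hxi Heq]]; try lra.
  intros x Hx; apply HE; lra.
  specialize (HdE xi ltac:(lra)). specialize (Hlow xi Hxi).
  assert (dE xi <= - kappa * (eps / 2)) by nra.
  assert (E (t + d) - E t <= - kappa * (eps/2) * d) by nra.
  specialize (Hdec T t ltac:(lra)). specialize (HL1 (t + d) ltac:(lra)). nra.
Qed.
Lemma abs_prod_bound k r a b R0 A B : 0 <= k -> 0 < r <= R0 -> Rabs a <= A -> Rabs b <= B ->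
  Rabs (k * r * a * b) <= k * R0 * A * B.
Proof.
  intros Hk Hr Ha Hb. rewrite !Rabs_mult, (Rabs_pos_eq k), (Rabs_pos_eq r) by lra.
  pose proof (Rabs_pos a); pose proof (Rabs_pos b).
  assert (0 <= k * r) by nra. assert (k * r <= k * R0) by nra.
  assert (0 <= k * r * Rabs a) by nra. assert (k * r * Rabs a <= k * R0 * A) by (apply Rmult_le_compat; nra).
  apply Rmult_le_compat; nra.
Qed.
Lemma sq_lt_abs a d : 0 < d -> a * a < d * d -> Rabs a < d.
Proof. intros Hd H. apply lt_abs. split; apply Rnot_le_lt; intros H'; nra. Qed.
Lemma sq_nn a : 0 <= a * a.
Proof. pose proof (Rle_0_sqr a); unfold Rsqr in *; lra. Qed.
Lemma sign_pos f a b : continuity f -> a <= b -> (forall x, a <= x <= b -> f x <> 0) ->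
  0 < f a -> 0 < f b.
Proof.
  intros Hc Hab Hn Ha. apply Rnot_le_lt; intros Hb.
  destruct (IVT_gen f a b 0 Hc) as [x [Hx Hfx]].
  - split; [pose proof (Rmin_r (f a) (f b))|pose proof (Rmax_l (f a) (f b))]; lra.
  - rewrite Rmin_left, Rmax_right in Hx by lra. exact (Hn x Hx Hfx).
Qed.
Lemma sign_neg f a b : continuity f -> a <= b -> (forall x, a <= x <= b -> f x <> 0) ->
  f a < 0 -> f b < 0.
Proof.
  intros Hc Hab Hn Ha. apply Rnot_le_lt; intros Hb.
  destruct (IVT_gen f a b 0 Hc) as [x [Hx Hfx]].
  - split; [pose proof (Rmin_l (f a) (f b))|pose proof (Rmax_r (f a) (f b))]; lra.
  - rewrite Rmin_left, Rmax_right in Hx by lra. exact (Hn x Hx Hfx).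
Qed.
Lemma quad_lemma B c eta a b r : 0 < B -> 0 < c -> 0 < eta <= 1/2 ->
  eta * (8 * B + 4 + 3 * (c * c)) <= 4 * B - c * c ->
  0 <= a <= c * (1 + eta) -> B * (1 - eta) <= b ->
  0 <= (1 - eta) * (r * r) + a * r + (b - eta).
Proof.
  intros HB Hc He Hcond Ha Hb.
  assert (Hbe : B * (1 - eta) - eta >= B * eta) by nra.
  assert (Ha2 : a * a <= c * c + 3 * (c * c) * eta).
  { assert (a * a <= (c * (1 + eta)) * (c * (1 + eta))) by (apply Rmult_le_compat; lra). nra. }
  assert (H4 : a * a <= 4 * (1 - eta) * (b - eta)) by nra.
  assert (Hid : 4 * (1 - eta) * ((1 - eta) * (r * r) + a * r + (b - eta)) =
     (2 * (1 - eta) * r + a) * (2 * (1 - eta) * r + a) + (4 * (1 - eta) * (b - eta) - a * a)) by ring.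
  pose proof (sq_nn (2 * (1 - eta) * r + a)).
  assert (0 <= 4 * (1 - eta) * ((1 - eta) * (r * r) + a * r + (b - eta))) by lra.
  nra.
Qed.
Lemma ex_cont f x : ex_derive f x -> continuity_pt f x.
Proof. intros [a H]. exact (D_cont f x a H). Qed.
Lemma D_opp f x a : is_derive f x a -> is_derive (fun t => - f t) x (- a).
Proof. intros; now apply (is_derive_opp f). Qed.
Lemma inf_exists (S : R -> Prop) lb x0 : (forall x, S x -> lb <= x) -> S x0 ->
  exists s, (forall x, S x -> s <= x) /\ (forall e, 0 < e -> exists x, S x /\ x < s + e).
Proof.
  intros Hlb Hx0. set (S' := fun y => S (- y)).
  assert (Hb : bound S'). { exists (- lb). intros y Hy. specialize (Hlb _ Hy). lra. }
  assert (Hne : exists y, S' y). { exists (- x0). unfold S'. now rewrite Ropp_involutive. }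
  destruct (completeness S' Hb Hne) as [M [HM1 HM2]].
  exists (- M). split.
  - intros x Hx. assert (- x <= M); [|lra]. apply HM1. unfold S'. now rewrite Ropp_involutive.
  - intros e He. apply NNPP; intros Hn.
    assert (M <= M - e); [|lra]. apply HM2. intros y Hy.
    destruct (Rle_dec y (M - e)); auto. exfalso; apply Hn. exists (- y); split; auto. lra.
Qed.
Lemma two_ab a b : 2 * (Rabs a * Rabs b) <= a * a + b * b.
Proof.
  assert (a * a = Rabs a * Rabs a) by (rewrite <- Rabs_mult; rewrite Rabs_right; [auto|apply Rle_ge, sq_nn]).
  assert (b * b = Rabs b * Rabs b) by (rewrite <- Rabs_mult; rewrite Rabs_right; [auto|apply Rle_ge, sq_nn]).
  pose proof (sq_nn (Rabs a - Rabs b)). nra.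
Qed.
Lemma neg_abs_mult a b : - (Rabs a * Rabs b) <= a * b.
Proof. rewrite <- Rabs_mult. pose proof (Rle_abs (- (a * b))). rewrite Rabs_Ropp in H. lra. Qed.

End H1mod.
Import H1mod.

Section Sys.
Variables th c m : R.
Hypothesis Hth : 0 < th.
Hypothesis Hc : 0 < c.
Hypothesis Hm : 1 <= m.
Hypothesis Hosc : c * m < 4 * th.
Variables v Q : R -> R.
Hypothesis HQ : forall t, 0 < Q t.
Definition q0 := Rpower th m.
Definition P t := Rpower (Q t) (/ m).
Hypothesis Hv : forall t, is_derive v t (th - P t).
Hypothesis HQd : forall t, is_derive Q t (c * (q0 * exp (v t) - Q t)).

Lemma q0_pos : 0 < q0.
Proof. apply Rpower_pos. Qed.
Lemma P_pos t : 0 < P t.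
Proof. apply Rpower_pos. Qed.
Lemma PQ t : Rpower (P t) m = Q t.
Proof. unfold P. apply Rpower_pow_inv; auto; lra. Qed.
Lemma q0_th : Rpower q0 (/ m) = th.
Proof. unfold q0. apply Rpower_inv_pow; lra. Qed.

Definition dP t := / m * Rpower (Q t) (/ m - 1) * (c * (q0 * exp (v t) - Q t)).
Lemma HP t : is_derive P t (dP t).
Proof.
  unfold P, dP. eapply D_ext. apply (D_comp (fun x => Rpower x (/m)) Q).
  apply D_rpow, HQ. apply HQd. ring.
Qed.

Lemma v_cont t : continuity_pt v t.
Proof. exact (D_cont _ _ _ (Hv t)). Qed.
Lemma Q_cont t : continuity_pt Q t.
Proof. exact (D_cont _ _ _ (HQd t)). Qed.
Lemma P_cont t : continuity_pt P t.
Proof. exact (D_cont _ _ _ (HP t)). Qed.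

Lemma P_ge_th t : q0 <= Q t -> th <= P t.
Proof. intros H. rewrite <- q0_th. unfold P. apply Rpower_le_pos.
  apply Rlt_le, Rinv_0_lt_compat; lra. split; [apply q0_pos|auto]. Qed.
Lemma P_le_th t : Q t <= q0 -> P t <= th.
Proof. intros H. rewrite <- q0_th. unfold P. apply Rpower_le_pos.
  apply Rlt_le, Rinv_0_lt_compat; lra. split; [apply HQ|auto]. Qed.

Definition K x := m / (m + 1) * Rpower x ((m + 1) / m) - th * x + th * q0 / (m + 1).
Lemma HK x : 0 < x -> is_derive K x (Rpower x (/ m) - th).
Proof.
  intros Hx. unfold K. eapply D_ext.
  apply D_plus. apply D_minus. apply D_scal. apply D_rpow; auto.
  apply D_scal, D_id. apply D_const.
  replace ((m + 1) / m - 1) with (/ m) by (field; lra). field; lra.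
Qed.
Lemma K_q0 : K q0 = 0.
Proof.
  unfold K, q0. rewrite Rpower_mult.
  replace (m * ((m + 1) / m)) with (m + 1) by (field; lra).
  rewrite Rpower_plus1 by lra. field; lra.
Qed.
Lemma K_nonneg x : 0 < x -> 0 <= K x.
Proof.
  intros Hx. rewrite <- K_q0. pose proof q0_pos.
  destruct (Rle_dec q0 x) as [H1|H1].
  - apply (mono_le K (fun y => Rpower y (/m) - th)); auto.
    intros y Hy; apply HK; lra.
    intros y Hy. rewrite <- q0_th. assert (Rpower q0 (/m) <= Rpower y (/m)); [|lra].
    apply Rpower_le_pos. apply Rlt_le, Rinv_0_lt_compat; lra. lra.
  - apply (anti_le K (fun y => Rpower y (/m) - th)); try lra.
    intros y Hy; apply HK; lra.
    intros y Hy. rewrite <- q0_th. assert (Rpower y (/m) <= Rpower q0 (/m)); [|lra].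
    apply Rpower_le_pos. apply Rlt_le, Rinv_0_lt_compat; lra. lra.
Qed.

Definition E t := c * q0 * (exp (v t) - 1 - v t) + K (Q t).
Definition g t := (P t - th) * (Q t - q0).
Lemma HE t : is_derive E t (- c * g t).
Proof.
  unfold E. eapply D_ext. apply D_plus. apply D_scal. apply D_minus. apply D_minus.
  apply (D_comp exp v). apply D_exp. apply Hv. apply D_const. apply Hv.
  apply (D_comp K Q). apply HK, HQ. apply HQd.
  unfold g, P. ring.
Qed.
Lemma g_nonneg t : 0 <= g t.
Proof.
  unfold g. destruct (Rle_dec q0 (Q t)).
  - pose proof (P_ge_th t r). unfold P in *. nra.
  - assert (Q t <= q0) by lra. pose proof (P_le_th t H). unfold P in *. nra.
Qed.
Lemma E_decr t s : t <= s -> E s <= E t.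
Proof.
  intros H. apply (anti_le E (fun x => - c * g x)); auto.
  intros; apply HE. intros x _. pose proof (g_nonneg x). nra.
Qed.
Lemma F_nonneg x : 0 <= exp x - 1 - x.
Proof. pose proof (exp_ineq1_le x). lra. Qed.
Lemma E_nonneg t : 0 <= E t.
Proof. unfold E. pose proof (F_nonneg (v t)). pose proof (K_nonneg _ (HQ t)). pose proof q0_pos.
  apply Rplus_le_le_0_compat; auto. apply Rmult_le_pos; auto. nra. Qed.


Lemma F_ge_abs x : Rabs x - 1 <= exp x - 1 - x.
Proof.
  destruct (Rle_dec 0 x).
  - rewrite Rabs_right by lra.
    replace (exp x) with (exp (x/2) * exp (x/2)) by (rewrite <- exp_plus; f_equal; field).
    pose proof (exp_ineq1_le (x/2)).
    assert ((1 + x/2) * (1 + x/2) <= exp (x/2) * exp (x/2)) by (apply Rmult_le_compat; lra).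
    assert (0 <= (1 - x/2) * (1 - x/2)) by (apply Rle_0_sqr). lra.
  - rewrite Rabs_left by lra. pose proof (exp_pos x). lra.
Qed.

Definition Vb := 1 + E 0 / (c * q0).
Lemma v_bound t : 0 <= t -> Rabs (v t) <= Vb.
Proof.
  intros Ht. pose proof (E_decr 0 t Ht). pose proof (K_nonneg _ (HQ t)).
  pose proof (F_ge_abs (v t)). pose proof q0_pos. unfold Vb.
  assert (c * q0 * (exp (v t) - 1 - v t) <= E 0) by (unfold E in *; lra).
  assert (Rabs (v t) - 1 <= E 0 / (c * q0)); [|lra].
  apply Rmult_le_reg_l with (c * q0). nra.
  assert (c*q0*(Rabs (v t) - 1) <= c*q0*(exp (v t) - 1 - v t)) by (apply Rmult_le_compat_l; nra).
  replace (c*q0*(E 0/(c*q0))) with (E 0) by (field; nra). lra.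
Qed.
Lemma Vb_pos : 0 <= Vb.
Proof. pose proof (v_bound 0 (Rle_refl 0)). pose proof (Rabs_pos (v 0)). lra. Qed.

Definition x1 := Rpower (2 * th) m.
Definition Qhi := x1 + E 0 / th.
Lemma Q_upper t : 0 <= t -> Q t <= Qhi.
Proof.
  intros Ht. unfold Qhi. pose proof (E_nonneg 0).
  assert (0 <= E 0 / th) by (apply Rmult_le_pos; [lra| apply Rlt_le, Rinv_0_lt_compat; lra]).
  destruct (Rle_dec (Q t) x1); [lra|].
  assert (Hk: K x1 - th * (x1 - x1) <= K (Q t) - th * (Q t - x1)).
  { apply (mono_le (fun x => K x - th * (x - x1)) (fun x => Rpower x (/m) - th - th)).
    lra. intros y Hy. eapply D_ext. apply D_minus. apply HK. unfold x1 in *; pose proof (Rpower_pos (2*th) m); lra.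
    apply D_scal. apply D_minus. apply D_id. apply D_const. ring.
    intros y Hy. assert (2 * th <= Rpower y (/m)); [|lra].
    replace (2 * th) with (Rpower x1 (/m)) by (unfold x1; apply Rpower_inv_pow; lra).
    apply Rpower_le_pos. apply Rlt_le, Rinv_0_lt_compat; lra. unfold x1 in *.
    pose proof (Rpower_pos (2*th) m). lra. }
  pose proof (K_nonneg x1 (Rpower_pos _ _)).
  pose proof (E_decr 0 t Ht). pose proof (F_nonneg (v t)). pose proof q0_pos.
  assert (K (Q t) <= E t). { unfold E. assert (0 <= c*q0*(exp (v t) - 1 - v t)) by (apply Rmult_le_pos; nra). lra. }
  assert (th * (Q t - x1) <= E 0) by lra.
  assert (Q t - x1 <= E 0 / th); [|lra].
  apply Rmult_le_reg_l with th; auto. replace (th * (E 0 / th)) with (E 0) by (field; lra). lra.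
Qed.

Definition mu := q0 * exp (- Vb).
Definition Qlo := Rmin (Q 0) mu.
Lemma Qlo_pos : 0 < Qlo.
Proof. unfold Qlo, mu. pose proof q0_pos. pose proof (exp_pos (-Vb)). pose proof (HQ 0).
  apply Rmin_case; nra. Qed.
Lemma Q_lower t : 0 <= t -> Qlo <= Q t.
Proof.
  intros Ht.
  assert (H: (Q 0 - mu) * exp (c * 0) <= (Q t - mu) * exp (c * t)).
  { apply (mono_le (fun s => (Q s - mu) * exp (c * s))
      (fun s => c * exp (c * s) * (q0 * exp (v s) - mu))); auto.
    intros y Hy. eapply D_ext. apply D_mult. apply D_minus. apply HQd. apply D_const.
    apply (D_comp exp (fun s => c * s)). apply D_exp. apply D_scal, D_id.
    cbv beta; ring.
    intros y Hy. pose proof (v_bound y (proj1 Hy)). unfold mu.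
    assert (exp (- Vb) <= exp (v y)) by (apply exp_le; apply abs_le in H; lra).
    pose proof (exp_pos (c*y)). pose proof q0_pos. apply Rmult_le_pos. nra. nra. }
  rewrite Rmult_0_r, exp_0, Rmult_1_r in H.
  assert (1 <= exp (c * t)) by (rewrite <- exp_0; apply exp_le; nra).
  unfold Qlo. destruct (Rle_dec mu (Q 0)).
  - rewrite Rmin_right by lra. nra.
  - rewrite Rmin_left by lra. nra.
Qed.

Lemma pow_mvt x : 0 < x ->
  m * Rpower (Rmin x th) (m - 1) * ((x - th) * (x - th)) <= (x - th) * (Rpower x m - q0).
Proof.
  intros Hx. unfold q0.
  assert (Hmin : 0 < Rmin x th) by (apply Rmin_case; lra).
  destruct (mvt2 (fun y => Rpower y m) (fun y => m * Rpower y (m - 1)) th x) as [xi [Hxi Heq]].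
  { intros y Hy. apply D_rpow. assert (Rmin th x = Rmin x th) by apply Rmin_comm. lra. }
  rewrite Heq. assert (Rmin th x = Rmin x th) by apply Rmin_comm.
  assert (Rpower (Rmin x th) (m - 1) <= Rpower xi (m - 1)) by (apply Rpower_le_pos; lra).
  assert (0 <= (x - th) * (x - th)) by (pose proof (Rle_0_sqr (x - th)); unfold Rsqr in *; lra).
  assert (0 <= m * (Rpower xi (m - 1) - Rpower (Rmin x th) (m - 1)) * ((x - th) * (x - th))).
  { apply Rmult_le_pos; [apply Rmult_le_pos|]; lra. }
  nra.
Qed.

Definition Plo := Rpower Qlo (/ m).
Definition Phi := Rpower Qhi (/ m).
Lemma P_bounds t : 0 <= t -> Plo <= P t <= Phi.
Proof.
  intros Ht. pose proof (Q_lower t Ht). pose proof (Q_upper t Ht). pose proof Qlo_pos.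
  unfold Plo, Phi, P. assert (0 <= / m) by (apply Rlt_le, Rinv_0_lt_compat; lra).
  split; apply Rpower_le_pos; auto; lra.
Qed.
Lemma Plo_pos : 0 < Plo.
Proof. apply Rpower_pos. Qed.

Definition phi t := (P t - th) * (P t - th).
Definition dphi t := 2 * (P t - th) * dP t.
Definition kg := m * Rpower (Rmin Plo th) (m - 1).
Lemma kg_pos : 0 < kg.
Proof. unfold kg. pose proof (Rpower_pos (Rmin Plo th) (m - 1)). nra. Qed.
Lemma g_phi t : 0 <= t -> kg * phi t <= g t.
Proof.
  intros Ht. unfold g, phi, kg. rewrite <- (PQ t). pose proof (P_bounds t Ht). pose proof Plo_pos.
  pose proof (pow_mvt (P t) (P_pos t)).
  assert (Rpower (Rmin Plo th) (m - 1) <= Rpower (Rmin (P t) th) (m - 1)).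
  { apply Rpower_le_pos. lra. split. apply Rmin_case; lra.
    apply Rmin_glb. pose proof (Rmin_l Plo th); lra. apply Rmin_r. }
  pose proof (sq_nn (P t - th)). pose proof kg_pos.
  assert (0 <= m * (Rpower (Rmin (P t) th) (m - 1) - Rpower (Rmin Plo th) (m - 1)) * ((P t - th) * (P t - th))).
  { apply Rmult_le_pos; [apply Rmult_le_pos|]; lra. }
  nra.
Qed.

Definition Mb := 2 / m * Rpower Qlo (/ m - 1) * (Phi + th) * (c * (q0 * exp Vb + Qhi)).
Lemma dphi_bound t : 0 <= t -> Rabs (dphi t) <= Mb.
Proof.
  intros Ht. unfold dphi, dP, Mb.
  replace (2 * (P t - th) * (/ m * Rpower (Q t) (/ m - 1) * (c * (q0 * exp (v t) - Q t))))
    with (2 / m * Rpower (Q t) (/ m - 1) * (P t - th) * (c * (q0 * exp (v t) - Q t))) by (field; lra).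
  apply abs_prod_bound.
  - apply Rlt_le, Rdiv_lt_0_compat; lra.
  - split. apply Rpower_pos. apply Rpower_le_neg.
    assert (/ m <= 1) by (rewrite <- Rinv_1; apply Rinv_le_contravar; lra). lra.
    split. apply Qlo_pos. apply Q_lower; auto.
  - pose proof (P_bounds t Ht). pose proof Plo_pos. apply le_abs; lra.
  - pose proof (v_bound t Ht). apply abs_le in H. pose proof (Q_lower t Ht). pose proof (Q_upper t Ht).
    pose proof Qlo_pos. pose proof q0_pos.
    assert (exp (v t) <= exp Vb) by (apply exp_le; lra). pose proof (exp_pos (v t)).
    rewrite Rabs_mult, (Rabs_pos_eq c) by lra. apply Rmult_le_compat_l; [lra|].
    apply le_abs. split; nra.
Qed.

Lemma phi_conv eps : 0 < eps -> exists T, 0 <= T /\ forall t, T <= t -> phi t < eps.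
Proof.
  intros Heps.
  assert (HMb : 0 < Mb + 1) by (pose proof (dphi_bound 0 (Rle_refl 0)); pose proof (Rabs_pos (dphi 0)); lra).
  apply (barbalat E (fun t => - c * g t) phi dphi (c * kg) (Mb + 1)); auto.
  - pose proof kg_pos; nra.
  - apply E_nonneg.
  - intros; apply HE.
  - intros t Ht. pose proof (g_phi t Ht). nra.
  - intros t; unfold phi; apply sq_nn.
  - intros t Ht. unfold phi, dphi. eapply D_ext. apply D_mult; (apply D_minus; [apply HP|apply D_const]).
    cbv beta; ring.
  - intros t Ht. pose proof (dphi_bound t Ht). lra.
Qed.

Lemma P_conv d : 0 < d -> exists T, 0 <= T /\ forall t, T <= t -> Rabs (P t - th) < d.
Proof.
  intros Hd. destruct (phi_conv (d * d)) as [T [HT HT']]. nra.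
  exists T; split; auto. intros t Ht. apply sq_lt_abs; auto. apply HT'; auto.
Qed.

Lemma v_continuity : continuity v.
Proof. intros x; apply v_cont. Qed.

Lemma Q_conv e : 0 < e -> exists T, 0 <= T /\ forall t, T <= t -> Rabs (Q t - q0) < e.
Proof.
  intros He.
  destruct (cont_eps (fun x => Rpower x m) th (D_cont _ _ _ (D_rpow th m Hth)) e He) as [d [Hd Hd']].
  destruct (P_conv d Hd) as [T [HT HT']]. exists T; split; auto.
  intros t Ht. rewrite <- PQ. apply Hd'. auto.
Qed.

Lemma L_zero e : 0 < e -> exists T, 0 <= T /\ E T < e.
Proof.
  intros He. destruct (dec_inf E E_nonneg) as [L [HL0 [HL1 HL2]]].
  destruct (Rle_lt_or_eq_dec 0 L HL0) as [HLp|HL].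
  2:{ subst L. destruct (HL2 e He) as [T [HT HT']]. exists T; split; auto; lra. }
  exfalso. pose proof q0_pos.
  destruct (cont_eps K q0 (D_cont _ _ _ (HK q0 q0_pos)) (L/2) ltac:(lra)) as [dK [HdK HdK']].
  rewrite K_q0 in HdK'.
  destruct (cont_eps (fun x => c * q0 * (exp x - 1 - x)) 0
    (D_cont _ _ (c * q0 * (exp 0 - 0 - 1)) ltac:(apply D_scal; apply D_minus; [apply D_minus; [apply D_exp|apply D_const]|apply D_id]))
    (L/2) ltac:(lra)) as [eta [Heta Heta']].
  rewrite exp_0 in Heta'.
  destruct (Q_conv dK HdK) as [T1 [HT1 HT1']].
  assert (Hv_big : forall t, T1 <= t -> eta <= Rabs (v t)).
  { intros t Ht. apply Rnot_lt_le; intros Hlt.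
    specialize (Heta' (v t) ltac:(rewrite Rminus_0_r; auto)).
    specialize (HdK' (Q t) (HT1' t Ht)). specialize (HL1 t ltac:(lra)).
    unfold E in HL1. apply abs_lt in Heta'. apply abs_lt in HdK'. lra. }
  assert (Hnz : forall t, T1 <= t -> v t <> 0).
  { intros t Ht H0. specialize (Hv_big t Ht). rewrite H0, Rabs_R0 in Hv_big. lra. }
  destruct (Rlt_or_le 0 (v T1)) as [Hpos|Hneg0].
  - (* v stays positive, Q must grow *)
    assert (Hvp : forall t, T1 <= t -> eta <= v t).
    { intros t Ht. assert (0 < v t).
      { apply (sign_pos v T1 t v_continuity Ht); auto. intros x Hx; apply Hnz; lra. }
      specialize (Hv_big t Ht). rewrite Rabs_right in Hv_big; lra. }
    set (sg := q0 * (exp eta - 1) / 2).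
    assert (Hsg : 0 < sg). { unfold sg. pose proof (exp_ineq1 eta ltac:(lra)). apply Rdiv_lt_0_compat; nra. }
    destruct (Q_conv sg Hsg) as [T2 [HT2 HT2']].
    set (T3 := Rmax T1 T2).
    assert (Hd : forall t, T3 <= t -> c * sg <= c * (q0 * exp (v t) - Q t)).
    { intros t Ht. apply Rmult_le_compat_l; [lra|].
      assert (exp eta <= exp (v t)) by (apply exp_le, Hvp; unfold T3 in Ht; pose proof (Rmax_l T1 T2); lra).
      specialize (HT2' t ltac:(unfold T3 in Ht; pose proof (Rmax_r T1 T2); lra)). apply abs_lt in HT2'.
      unfold sg in *. nra. }
    set (s := Qhi / (c * sg) + 1).
    assert (Hs : 0 < s). { unfold s. pose proof (Q_upper 0 (Rle_refl 0)). pose proof (HQ 0).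
      assert (0 <= Qhi / (c * sg)) by (apply Rmult_le_pos; [lra| apply Rlt_le, Rinv_0_lt_compat; nra]). lra. }
    assert (Hm2 : Q T3 - c * sg * T3 <= Q (T3 + s) - c * sg * (T3 + s)).
    { apply (mono_le (fun t => Q t - c * sg * t) (fun t => c * (q0 * exp (v t) - Q t) - c * sg * 1)).
      lra. intros x Hx. apply D_minus. apply HQd. apply D_scal, D_id.
      intros x Hx. specialize (Hd x ltac:(lra)). lra. }
    assert (HT3 : 0 <= T3) by (unfold T3; pose proof (Rmax_l T1 T2); lra).
    pose proof (Q_upper (T3 + s) ltac:(lra)). pose proof (HQ T3).
    assert (c * sg * s = Qhi + c * sg) by (unfold s; field; nra). nra.
  - assert (Hvn : forall t, T1 <= t -> v t <= - eta).
    { intros t Ht. assert (v t < 0).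
      { apply (sign_neg v T1 t v_continuity Ht); auto. intros x Hx; apply Hnz; lra.
        destruct Hneg0; auto. exfalso; apply (Hnz T1); lra. }
      specialize (Hv_big t Ht). rewrite Rabs_left in Hv_big; lra. }
    set (sg := q0 * (1 - exp (- eta)) / 2).
    assert (Hsg : 0 < sg). { unfold sg. pose proof (exp_increasing (-eta) 0 ltac:(lra)). rewrite exp_0 in H0.
      apply Rdiv_lt_0_compat; nra. }
    destruct (Q_conv sg Hsg) as [T2 [HT2 HT2']].
    set (T3 := Rmax T1 T2).
    assert (Hd : forall t, T3 <= t -> c * (q0 * exp (v t) - Q t) <= - (c * sg)).
    { intros t Ht.
      assert (exp (v t) <= exp (- eta)) by (apply exp_le, Hvn; unfold T3 in Ht; pose proof (Rmax_l T1 T2); lra).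
      specialize (HT2' t ltac:(unfold T3 in Ht; pose proof (Rmax_r T1 T2); lra)). apply abs_lt in HT2'.
      assert (q0 * exp (v t) - Q t <= - sg) by (unfold sg in *; nra). nra. }
    set (s := Qhi / (c * sg) + 1).
    assert (Hs : 0 < s). { unfold s. pose proof (Q_upper 0 (Rle_refl 0)). pose proof (HQ 0).
      assert (0 <= Qhi / (c * sg)) by (apply Rmult_le_pos; [lra| apply Rlt_le, Rinv_0_lt_compat; nra]). lra. }
    assert (Hm2 : Q (T3 + s) + c * sg * (T3 + s) <= Q T3 + c * sg * T3).
    { apply (anti_le (fun t => Q t + c * sg * t) (fun t => c * (q0 * exp (v t) - Q t) + c * sg * 1)).
      lra. intros x Hx. apply D_plus. apply HQd. apply D_scal, D_id.
      intros x Hx. specialize (Hd x ltac:(lra)). lra. }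
    assert (HT3 : 0 <= T3) by (unfold T3; pose proof (Rmax_l T1 T2); lra).
    pose proof (Q_upper T3 HT3). pose proof (HQ (T3 + s)).
    assert (c * sg * s = Qhi + c * sg) by (unfold s; field; nra). nra.
Qed.

Lemma F0_pos x : x <> 0 -> 0 < exp x - 1 - x.
Proof. intros H; pose proof (exp_ineq1 x H); lra. Qed.

Lemma v_conv d : 0 < d -> exists T, 0 <= T /\ forall t, T <= t -> Rabs (v t) < d.
Proof.
  intros Hd. pose proof q0_pos.
  set (e := c * q0 * Rmin (exp d - 1 - d) (exp (-d) - 1 - (-d))).
  assert (He : 0 < e). { unfold e. apply Rmult_lt_0_compat. nra.
    apply Rmin_case; apply F0_pos; lra. }
  destruct (L_zero e He) as [T [HT HT']]. exists T; split; auto.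
  intros t Ht. apply Rnot_le_lt; intros Hb.
  pose proof (E_decr T t Ht). pose proof (K_nonneg _ (HQ t)).
  assert (HF : Rmin (exp d - 1 - d) (exp (-d) - 1 - (-d)) <= exp (v t) - 1 - v t).
  { destruct (Rle_dec 0 (v t)).
    - rewrite Rabs_right in Hb by lra. eapply Rle_trans. apply Rmin_l.
      apply (mono_le (fun x => exp x - 1 - x) (fun x => exp x - 0 - 1)); auto.
      intros x Hx; apply D_minus; [apply D_minus; [apply D_exp|apply D_const]|apply D_id].
      intros x Hx. pose proof (exp_le 0 x ltac:(lra)). rewrite exp_0 in H2. lra.
    - rewrite Rabs_left in Hb by lra. eapply Rle_trans. apply Rmin_r.
      apply (anti_le (fun x => exp x - 1 - x) (fun x => exp x - 0 - 1)); try lra.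
      intros x Hx; apply D_minus; [apply D_minus; [apply D_exp|apply D_const]|apply D_id].
      intros x Hx. pose proof (exp_le x 0 ltac:(lra)). rewrite exp_0 in H2. lra. }
  unfold E in *. unfold e in *.
  assert (c * q0 * Rmin (exp d - 1 - d) (exp (- d) - 1 - - d) <= c * q0 * (exp (v t) - 1 - v t)).
  { apply Rmult_le_compat_l; nra. }
  lra.
Qed.

Definition Bq := c * th / m.
Definition Dd := 4 * Bq - c * c.
Definition eta0 := Rmin (1/2) (Dd / (8 * Bq + 4 + 3 * (c * c))).
Definition f1 y := Rpower (th - y) (1 - m) * Rpower (th + y) (m - 1).
Definition f2 y := Rpower (th + y) (1 - m) * exp (- y) * (q0 / th).

Lemma Bq_pos : 0 < Bq.
Proof. unfold Bq. apply Rdiv_lt_0_compat; nra. Qed.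
Lemma Dd_pos : 0 < Dd.
Proof.
  unfold Dd, Bq. replace (4 * (c * th / m) - c * c) with (c * (4 * th - c * m) / m) by (field; lra).
  apply Rdiv_lt_0_compat; nra.
Qed.
Lemma eta0_props : 0 < eta0 <= 1/2 /\ eta0 * (8 * Bq + 4 + 3 * (c * c)) <= Dd.
Proof.
  pose proof Bq_pos; pose proof Dd_pos.
  assert (Hden : 0 < 8 * Bq + 4 + 3 * (c * c)) by nra.
  unfold eta0. split. split. apply Rmin_case. lra. apply Rdiv_lt_0_compat; lra. apply Rmin_l.
  apply Rle_trans with ((Dd / (8 * Bq + 4 + 3 * (c * c))) * (8 * Bq + 4 + 3 * (c * c))).
  apply Rmult_le_compat_r. lra. apply Rmin_r. right; field; lra.
Qed.

Lemma f1_0 : f1 0 = 1.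
Proof. unfold f1. rewrite Rminus_0_r, Rplus_0_r, <- Rpower_plus.
  replace (1 - m + (m - 1)) with 0 by ring. apply Rpower_O; lra. Qed.
Lemma f2_0 : f2 0 = 1.
Proof. unfold f2, q0. rewrite Rplus_0_r, Ropp_0, exp_0, Rmult_1_r.
  unfold Rdiv. rewrite <- Rmult_assoc, <- Rpower_plus. replace (1 - m + m) with 1 by ring. rewrite Rpower_1 by lra. field; lra. Qed.

Lemma f1_cont : continuity_pt f1 0.
Proof.
  apply ex_cont. unfold f1. eexists. apply D_mult.
  apply (D_comp (fun x => Rpower x (1 - m)) (fun y => th - y)). apply D_rpow. lra.
  apply D_minus. apply D_const. apply D_id.
  apply (D_comp (fun x => Rpower x (m - 1)) (fun y => th + y)). apply D_rpow. lra.
  apply D_plus. apply D_const. apply D_id.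
Qed.
Lemma f2_cont : continuity_pt f2 0.
Proof.
  apply ex_cont. unfold f2. eexists.
  apply (D_mult (fun y => Rpower (th + y) (1 - m) * exp (- y)) (fun _ => q0 / th)).
  2: apply D_const.
  apply D_mult.
  apply (D_comp (fun x => Rpower x (1 - m)) (fun y => th + y)). apply D_rpow. lra.
  apply D_plus. apply D_const. apply D_id.
  apply (D_comp exp (fun y => - y)). apply D_exp. apply (D_opp (fun y => y)). apply D_id.
Qed.

Definition rho s := (th - P s) / v s.
Definition drho t := ((0 - dP t) * v t - (th - P t) * (th - P t)) / v t ^ 2.

Lemma ricc_pt d t : 0 < d <= th / 2 -> f1 d <= 1 + eta0 -> 1 - eta0 <= f2 d ->
  v t <> 0 -> Rabs (v t) < d -> Rabs (P t - th) < d ->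
  is_derive rho t (drho t) /\ drho t <= - eta0 * (1 + rho t * rho t).
Proof.
  intros Hd Hf1 Hf2 Hv0 Hvd HPd. split.
  { unfold rho, drho. apply (is_derive_div (fun s => th - P s) v t).
    apply D_minus. apply D_const. apply HP. apply Hv. exact Hv0. }
  apply abs_lt in Hvd. apply abs_lt in HPd.
  destruct (mvt2 exp exp 0 (v t)) as [z [Hz Hez]].
  { intros; apply D_exp. }
  destruct (mvt2 (fun y => Rpower y m) (fun y => m * Rpower y (m - 1)) th (P t)) as [xi [Hxi Hexi]].
  { intros y Hy. apply D_rpow. assert (0 < Rmin th (P t)) by (apply Rmin_case; lra). lra. }
  rewrite exp_0 in Hez.
  assert (Hz' : - d <= z) by (assert (Rmin 0 (v t) >= - d) by (apply Rmin_case; lra); lra).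
  assert (Hxi1 : th - d <= xi) by (assert (Rmin th (P t) >= th - d) by (apply Rmin_case; lra); lra).
  assert (Hxi2 : xi <= th + d) by (assert (Rmax th (P t) <= th + d) by (apply Rmax_case; lra); lra).
  set (pp := Rpower (P t) (1 - m)).
  set (xx := Rpower xi (m - 1)).
  set (ez := exp z).
  assert (HQP : Rpower (Q t) (/ m - 1) = pp).
  { unfold pp. rewrite <- (PQ t). rewrite Rpower_mult. f_equal. field. lra. }
  set (a := c * pp * xx).
  set (b := c / m * pp * q0 * ez).
  set (r := rho t).
  assert (Hr : th - P t = r * v t) by (unfold r, rho; field; auto).
  assert (Hdr : drho t = - (b + a * r) - r * r).
  { unfold drho, dP. rewrite HQP. rewrite <- (PQ t).
    replace (q0 * exp (v t) - Rpower (P t) m) with (q0 * (exp (v t) - 1) - (Rpower (P t) m - q0)) by ring.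
    unfold q0 at 2. rewrite Hexi, Hez. fold ez xx. replace (P t - th) with (- (th - P t)) by ring. rewrite Hr. unfold a, b. field. split; lra. }
  rewrite Hdr.
  assert (Hpp1 : pp <= Rpower (th - d) (1 - m)) by (apply Rpower_le_neg; lra).
  assert (Hpp2 : Rpower (th + d) (1 - m) <= pp) by (apply Rpower_le_neg; lra).
  assert (Hxx : xx <= Rpower (th + d) (m - 1)) by (apply Rpower_le_pos; lra).
  assert (Hezb : exp (- d) <= ez) by (apply exp_le; lra).
  assert (Hpp0 : 0 < pp) by apply Rpower_pos. assert (Hxx0 : 0 < xx) by apply Rpower_pos.
  assert (Hez0 : 0 < ez) by apply exp_pos. pose proof q0_pos.
  assert (Ha : 0 <= a <= c * (1 + eta0)).
  { unfold a. split. apply Rmult_le_pos; [nra|lra].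
    apply Rle_trans with (c * f1 d); [|apply Rmult_le_compat_l; lra].
    unfold f1. rewrite Rmult_assoc. apply Rmult_le_compat_l. lra.
    apply Rmult_le_compat; lra. }
  assert (Hb : Bq * (1 - eta0) <= b).
  { apply Rle_trans with (Bq * f2 d). apply Rmult_le_compat_l; [pose proof Bq_pos; lra|lra].
    unfold Bq, f2, b.
    replace (c * th / m * (Rpower (th + d) (1 - m) * exp (- d) * (q0 / th)))
      with (c / m * q0 * (Rpower (th + d) (1 - m) * exp (- d))) by (field; lra).
    replace (c / m * pp * q0 * ez) with (c / m * q0 * (pp * ez)) by ring.
    apply Rmult_le_compat_l. apply Rmult_le_pos; [apply Rlt_le, Rdiv_lt_0_compat|]; lra.
    apply Rmult_le_compat; try lra. apply Rlt_le, Rpower_pos. apply Rlt_le, exp_pos. }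
  destruct eta0_props as [He1 He2].
  pose proof (quad_lemma Bq c eta0 a b r Bq_pos Hc He1 ltac:(unfold Dd in He2; lra) Ha Hb).
  nra.
Qed.

Lemma osc T : exists t, T < t /\ v t = 0.
Proof.
  apply NNPP; intros Hn.
  assert (Hnz : forall t, T < t -> v t <> 0). { intros t Ht H0. apply Hn. exists t; auto. }
  destruct eta0_props as [[He0 He1] _].
  destruct (cont_eps f1 0 f1_cont eta0 He0) as [d1 [Hd1 Hd1']].
  destruct (cont_eps f2 0 f2_cont eta0 He0) as [d2 [Hd2 Hd2']].
  rewrite f1_0 in Hd1'. rewrite f2_0 in Hd2'.
  set (d := Rmin (Rmin (d1/2) (d2/2)) (th/2)).
  assert (Hdp : 0 < d) by (unfold d; repeat apply Rmin_case; lra).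
  assert (Hdd1 : d <= d1/2) by (unfold d; eapply Rle_trans; [apply Rmin_l|apply Rmin_l]).
  assert (Hdd2 : d <= d2/2) by (unfold d; eapply Rle_trans; [apply Rmin_l|apply Rmin_r]).
  assert (Hdth : d <= th/2) by (unfold d; apply Rmin_r).
  assert (Hf1 : f1 d <= 1 + eta0).
  { assert (Rabs (d - 0) < d1) by (rewrite Rminus_0_r, Rabs_right; lra).
    specialize (Hd1' d H). apply abs_lt in Hd1'. lra. }
  assert (Hf2 : 1 - eta0 <= f2 d).
  { assert (Rabs (d - 0) < d2) by (rewrite Rminus_0_r, Rabs_right; lra).
    specialize (Hd2' d H). apply abs_lt in Hd2'. lra. }
  destruct (v_conv d Hdp) as [Tv [_ HTv]].
  destruct (P_conv d Hdp) as [TP [_ HTP]].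
  set (T0 := Rmax (Rmax Tv TP) (T + 1)).
  assert (HT0 : Tv <= T0 /\ TP <= T0 /\ T + 1 <= T0).
  { unfold T0. pose proof (Rmax_l (Rmax Tv TP) (T+1)). pose proof (Rmax_r (Rmax Tv TP) (T+1)).
    pose proof (Rmax_l Tv TP). pose proof (Rmax_r Tv TP). lra. }
  assert (Hpt : forall t, T0 <= t -> is_derive rho t (drho t) /\ drho t <= - eta0 * (1 + rho t * rho t)).
  { intros t Ht. apply (ricc_pt d t); auto; try lra.
    apply Hnz; lra. apply HTv; lra. apply HTP; lra. }
  set (Lp := PI / eta0).
  assert (HLp : 0 < Lp) by (unfold Lp; apply Rdiv_lt_0_compat; [apply PI_RGT_0|lra]).
  assert (Hh : atan (rho (T0 + Lp)) + eta0 * (T0 + Lp) <= atan (rho T0) + eta0 * T0).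
  { apply (anti_le (fun s => atan (rho s) + eta0 * s)
      (fun s => drho s * / (1 + rho s ^ 2) + eta0 * 1)). lra.
    intros x Hx. apply D_plus. apply (D_comp atan rho). apply D_atan. apply Hpt; lra.
    apply D_scal, D_id.
    intros x Hx. destruct (Hpt x ltac:(lra)) as [_ Hle].
    assert (Hpos : 0 < 1 + rho x ^ 2) by (pose proof (sq_nn (rho x)); simpl; lra).
    assert (drho x * / (1 + rho x ^ 2) <= - eta0); [|lra].
    apply Rmult_le_reg_r with (1 + rho x ^ 2); auto.
    rewrite Rmult_assoc, Rinv_l by lra. simpl in *. nra. }
  assert (eta0 * Lp = PI) by (unfold Lp; field; lra).
  pose proof (atan_bound (rho (T0 + Lp))). pose proof (atan_bound (rho T0)). lra.
Qed.

Lemma U1 u : v u = 0 -> Q u = q0 ->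
  exists dl, 0 < dl /\ forall x, u - dl <= x <= u -> v x = 0 /\ Q x = q0.
Proof.
  intros Hvu HQu. pose proof q0_pos.
  destruct (cont_eps v u (v_cont u) 1 ltac:(lra)) as [d1 [Hd1 Hd1']].
  destruct (cont_eps Q u (Q_cont u) (q0/2) ltac:(lra)) as [d2 [Hd2 Hd2']].
  rewrite Hvu in Hd1'. rewrite HQu in Hd2'.
  set (dl := Rmin d1 d2 / 2).
  assert (Hdl : 0 < dl) by (unfold dl; apply Rmin_case; lra).
  assert (Hloc : forall y, u - dl <= y <= u -> -1 < v y < 1 /\ q0/2 < Q y < 3 * q0 / 2).
  { intros y Hy. assert (dl <= d1/2 /\ dl <= d2/2) by (unfold dl; split; apply Rmult_le_compat_r; try lra; [apply Rmin_l|apply Rmin_r]).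
    assert (Rabs (y - u) < d1) by (apply lt_abs; lra). assert (Rabs (y - u) < d2) by (apply lt_abs; lra).
    specialize (Hd1' y H1). specialize (Hd2' y H2). apply abs_lt in Hd1'. apply abs_lt in Hd2'. lra. }
  set (L := / m * Rpower (q0/2) (/ m - 1)).
  assert (HL : 0 < L) by (unfold L; apply Rmult_lt_0_compat; [apply Rinv_0_lt_compat; lra|apply Rpower_pos]).
  assert (HPb : forall y, u - dl <= y <= u -> Rabs (th - P y) <= L * Rabs (Q y - q0)).
  { intros y Hy. destruct (Hloc y Hy) as [_ HQy].
    destruct (mvt2 (fun x => Rpower x (/m)) (fun x => / m * Rpower x (/ m - 1)) q0 (Q y)) as [xi [Hxi Heq]].
    { intros x Hx. apply D_rpow. assert (Rmin q0 (Q y) > 0) by (apply Rmin_case; lra). lra. }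
    rewrite q0_th in Heq. fold (P y) in Heq.
    replace (th - P y) with (- (/ m * Rpower xi (/ m - 1) * (Q y - q0))) by lra.
    rewrite Rabs_Ropp, !Rabs_mult, (Rabs_pos_eq (/ m)), (Rabs_pos_eq (Rpower xi _)).
    2: apply Rlt_le, Rpower_pos. 2: apply Rlt_le, Rinv_0_lt_compat; lra.
    unfold L. apply Rmult_le_compat_r. apply Rabs_pos. apply Rmult_le_compat_l.
    apply Rlt_le, Rinv_0_lt_compat; lra. apply Rpower_le_neg.
    assert (/ m <= 1) by (rewrite <- Rinv_1; apply Rinv_le_contravar; lra). lra.
    assert (Rmin q0 (Q y) >= q0/2) by (apply Rmin_case; lra). lra. }
  assert (Heb : forall y, u - dl <= y <= u -> Rabs (exp (v y) - 1) <= 3 * Rabs (v y)).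
  { intros y Hy. destruct (Hloc y Hy) as [Hvy _].
    destruct (mvt2 exp exp 0 (v y)) as [z [Hz Heq]]. intros; apply D_exp.
    rewrite exp_0, Rminus_0_r in Heq. rewrite Heq, Rabs_mult, (Rabs_pos_eq (exp z)) by (apply Rlt_le, exp_pos).
    apply Rmult_le_compat_r. apply Rabs_pos.
    assert (z <= 1) by (assert (Rmax 0 (v y) <= 1) by (apply Rmax_case; lra); lra).
    pose proof (exp_le z 1 H0). pose proof exp_le_3. lra. }
  set (M := L + 3 * c * q0 + 2 * c).
  exists dl; split; auto. intros x Hx.
  assert (HG : (v x * v x + (Q x - q0) * (Q x - q0)) * exp (M * x) <=
               (v u * v u + (Q u - q0) * (Q u - q0)) * exp (M * u)).
  { apply (mono_le (fun y => (v y * v y + (Q y - q0) * (Q y - q0)) * exp (M * y))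
      (fun y => (2 * v y * (th - P y) + 2 * (Q y - q0) * (c * (q0 * exp (v y) - Q y))
                 + M * (v y * v y + (Q y - q0) * (Q y - q0))) * exp (M * y))). lra.
    - intros y Hy. eapply D_ext. apply D_mult. apply D_plus. apply D_mult; apply Hv.
      apply D_mult; (apply D_minus; [apply HQd|apply D_const]).
      apply (D_comp exp (fun s => M * s)). apply D_exp. apply D_scal, D_id.
      cbv beta; ring.
    - intros y Hy. assert (Hy' : u - dl <= y <= u) by lra.
      apply Rmult_le_pos; [|apply Rlt_le, exp_pos].
      specialize (HPb y Hy'). specialize (Heb y Hy').
      set (a := v y) in *. set (b := Q y - q0) in *. set (p := th - P y) in *.
      set (e := exp (v y) - 1) in *.
      replace (q0 * exp a - Q y) with (q0 * e - b) by (unfold e, b, a; ring).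
      pose proof (neg_abs_mult a p). pose proof (neg_abs_mult b e).
      pose proof (two_ab a b).
      assert (Rabs a * Rabs p <= Rabs a * (L * Rabs b)) by (apply Rmult_le_compat_l; [apply Rabs_pos|auto]).
      assert (Rabs b * Rabs e <= Rabs b * (3 * Rabs a)) by (apply Rmult_le_compat_l; [apply Rabs_pos|auto]).
      pose proof (sq_nn a). pose proof (sq_nn b).
      unfold M.
      assert (2 * a * p >= - L * (a * a + b * b)) by nra.
      assert (Hbe : b * e >= - (3/2) * (a * a + b * b)) by lra.
      assert (c * q0 * (b * e) >= c * q0 * (- (3/2) * (a * a + b * b))).
      { apply Rmult_ge_compat_l. apply Rle_ge, Rmult_le_pos; lra. auto. }
      assert (2 * b * (c * (q0 * e - b)) >= - 3 * c * q0 * (a * a + b * b) - 2 * c * (b * b)) by nra.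
      assert (0 <= c * (a * a)) by (apply Rmult_le_pos; lra). lra. }
  rewrite Hvu, HQu in HG. replace ((0 * 0 + (q0 - q0) * (q0 - q0)) * exp (M * u)) with 0 in HG by ring.
  pose proof (exp_pos (M * x)). pose proof (sq_nn (v x)). pose proof (sq_nn (Q x - q0)).
  assert (Hz : v x * v x + (Q x - q0) * (Q x - q0) <= 0) by nra.
  split; nra.
Qed.

Section Neg.
Variable t1 : R.
Hypothesis Ht1 : forall t, t <= t1 -> v t < 0.

Lemma U2 u : v u = 0 -> Q u = q0 -> False.
Proof.
  intros Hvu HQu.
  set (S := fun x => x <= u /\ forall y, x <= y <= u -> v y = 0 /\ Q y = q0).
  assert (Hlb : forall x, S x -> t1 <= x).
  { intros x [Hxu Hx]. apply Rnot_lt_le; intros Hlt. destruct (Hx x ltac:(lra)) as [H0 _].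
    specialize (Ht1 x ltac:(lra)). lra. }
  assert (Hu : S u). { split. lra. intros y Hy. assert (y = u) by lra. subst; auto. }
  destruct (inf_exists S t1 u Hlb Hu) as [s [Hs1 Hs2]].
  assert (Hsu : s <= u) by (apply Hs1; auto).
  assert (Hright : forall y, s < y <= u -> v y = 0 /\ Q y = q0).
  { intros y Hy. destruct (Hs2 (y - s) ltac:(lra)) as [x [[Hxu Hx] Hxy]]. apply Hx.
    pose proof (Hs1 x (conj Hxu Hx)). lra. }
  assert (Hvs : v s = 0).
  { apply NNPP; intros Hn.
    assert (Hp : 0 < Rabs (v s)) by (apply Rabs_pos_lt; auto).
    destruct (cont_eps v s (v_cont s) (Rabs (v s)) Hp) as [d [Hd Hd']].
    destruct (Hs2 d Hd) as [x [[Hxu Hx] Hxs]]. pose proof (Hs1 x (conj Hxu Hx)).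
    destruct (Hx x ltac:(lra)) as [Hvx _]. specialize (Hd' x ltac:(apply lt_abs; lra)).
    rewrite Hvx, Rminus_0_l, Rabs_Ropp in Hd'. lra. }
  assert (HQs : Q s = q0).
  { apply NNPP; intros Hn.
    assert (Hp : 0 < Rabs (Q s - q0)) by (apply Rabs_pos_lt; lra).
    destruct (cont_eps Q s (Q_cont s) (Rabs (Q s - q0)) Hp) as [d [Hd Hd']].
    destruct (Hs2 d Hd) as [x [[Hxu Hx] Hxs]]. pose proof (Hs1 x (conj Hxu Hx)).
    destruct (Hx x ltac:(lra)) as [_ HQx]. specialize (Hd' x ltac:(apply lt_abs; lra)).
    rewrite HQx in Hd'. replace (q0 - Q s) with (- (Q s - q0)) in Hd' by ring. rewrite Rabs_Ropp in Hd'. lra. }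
  destruct (U1 s Hvs HQs) as [dl [Hdl Hdl']].
  assert (S (s - dl)).
  { split. lra. intros y Hy. destruct (Rle_dec y s). apply Hdl'; lra. apply Hright; lra. }
  specialize (Hs1 _ H). lra.
Qed.

Lemma LS s : exists d, 0 < d /\ forall x, Rabs (x - s) < d -> v x = 0 -> x = s.
Proof.
  destruct (Req_dec (v s) 0) as [Hvs|Hvs].
  - assert (HPs : P s <> th).
    { intros HP'. apply (U2 s Hvs). rewrite <- (PQ s), HP'. reflexivity. }
    assert (Hp : 0 < Rabs (th - P s)) by (apply Rabs_pos_lt; lra).
    destruct (cont_eps P s (P_cont s) (Rabs (th - P s)) Hp) as [d [Hd Hd']].
    exists d; split; auto. intros x Hx Hvx. apply NNPP; intros Hne.
    destruct (mvt2 v (fun y => th - P y) s x) as [xi [Hxi Heq]]. intros; apply Hv.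
    rewrite Hvx, Hvs, Rminus_0_r in Heq.
    assert (Hxis : Rabs (xi - s) < d).
    { apply abs_lt in Hx. apply lt_abs.
      assert (Rmin s x > s - d) by (apply Rmin_case; lra).
      assert (Rmax s x < s + d) by (apply Rmax_case; lra). lra. }
    specialize (Hd' xi Hxis).
    assert (th - P xi <> 0).
    { intros H0. replace (P xi - P s) with (th - P s) in Hd' by lra. lra. }
    assert (x - s <> 0) by lra.
    symmetry in Heq. apply Rmult_integral in Heq. tauto.
  - assert (Hp : 0 < Rabs (v s)) by (apply Rabs_pos_lt; auto).
    destruct (cont_eps v s (v_cont s) (Rabs (v s)) Hp) as [d [Hd Hd']].
    exists d; split; auto. intros x Hx Hvx. specialize (Hd' x Hx).
    rewrite Hvx, Rminus_0_l, Rabs_Ropp in Hd'. lra.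
Qed.

Definition Zfin s := exists l : list R, forall x, x <= s -> v x = 0 -> In x l.

Lemma finite_zeros T : Zfin T.
Proof.
  apply NNPP; intros HT.
  set (A := fun s => ~ Zfin s).
  assert (Hlb : forall s, A s -> t1 <= s).
  { intros s Hs. apply Rnot_lt_le; intros Hlt. apply Hs. exists nil.
    intros x Hx Hvx. specialize (Ht1 x ltac:(lra)). lra. }
  destruct (inf_exists A t1 T Hlb HT) as [s [Hs1 Hs2]].
  destruct (LS s) as [d [Hd Hd']].
  assert (Hz : Zfin (s - d/2)).
  { apply NNPP; intros Hn. specialize (Hs1 _ Hn). lra. }
  destruct Hz as [l Hl].
  destruct (Hs2 (d/2) ltac:(lra)) as [s' [Hs' Hs'lt]].
  apply Hs'. exists (s :: l). intros x Hx Hvx.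
  destruct (Rle_dec x (s - d/2)).
  - right. apply Hl; auto.
  - left. symmetry. apply Hd'; auto. pose proof (Hs1 s' Hs'). apply lt_abs; lra.
Qed.
End Neg.

End Sys.


Lemma right_lim_bound (f : R->R) : filterlim f (at_right 0) (locally 0) ->
  exists d, 0 < d /\ forall h, 0 < h < d -> Rabs (f h) < 1.
Proof.
  intros H. pose proof (proj1 (@filterlim_locally _ _ (at_right 0) _ f 0) H (mkposreal 1 Rlt_0_1)) as H1.
  destruct H1 as [e He]. exists e. split. apply cond_pos. intros h Hh.
  assert (Hb : ball 0 e h). { apply Rabs_lt_between'. simpl. lra. }
  specialize (He h Hb ltac:(simpl; lra)). apply Rabs_lt_between.
  change (ball 0 1 (f h)) in He. apply Rabs_lt_between' in He. simpl in He. lra.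
Qed.

Section Main.
Variables alpha beta gamma rho : R.
Variable w : R -> R.
Hypothesis Hab : alpha > beta + 1.
Hypothesis Hb : beta >= 0.
Hypothesis Hth : theta alpha beta gamma > 0.
Hypothesis Hsol : is_solution alpha beta gamma rho w.

Definition fl := flux alpha beta w.
Definition mm := beta + 1.

Lemma flux_deriv r : 0 < r -> is_derive fl r (- exp (w r) * Rpower r gamma).
Proof.
  intros Hr. destruct Hsol as [_ [_ [_ Hfl]]]. destruct (Hfl r Hr) as [Hex Heq].
  apply Derive_correct in Hex. eapply D_ext. exact Hex.
  assert (H1 : Rpower r (- gamma) * Rpower r gamma = 1).
  { rewrite <- Rpower_plus. replace (- gamma + gamma) with 0 by ring. apply Rpower_O; auto. }
  fold fl in Heq. change (Derive fl r = - exp (w r) * Rpower r gamma).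
  set (D := Derive fl r) in *. set (a := Rpower r (- gamma)) in *. set (b := Rpower r gamma) in *.
  assert (a * D = - exp (w r)) by lra.
  transitivity (D * (a * b)). rewrite H1; ring.
  transitivity ((a * D) * b). ring. rewrite H. ring.
Qed.

Lemma w_near0 : exists r1, 0 < r1 /\ forall r, 0 < r <= r1 -> rho - 1 < w r < rho + 1.
Proof.
  destruct Hsol as [Hw0 [Hlim _]].
  destruct (right_lim_bound _ Hlim) as [d [Hd Hd']].
  exists (Rmin (d/2) 1). split. apply Rmin_case; lra.
  intros r Hr. assert (r <= d/2 /\ r <= 1) by (split; [eapply Rle_trans; [apply Hr|apply Rmin_l]|eapply Rle_trans; [apply Hr|apply Rmin_r]]).
  specialize (Hd' r ltac:(lra)). apply abs_lt in Hd'. rewrite Hw0 in Hd'.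
  assert (-1 * r < w r - rho < 1 * r).
  { destruct Hd' as [Ha Hb']. split.
    - apply Rmult_lt_compat_r with (r := r) in Ha; [|lra]. unfold Rdiv in Ha. rewrite Rmult_assoc, Rinv_l in Ha by lra. lra.
    - apply Rmult_lt_compat_r with (r := r) in Hb'; [|lra]. unfold Rdiv in Hb'. rewrite Rmult_assoc, Rinv_l in Hb' by lra. lra. }
  lra.
Qed.

Lemma w_deriv r : 0 < r -> is_derive w r (Derive w r).
Proof. intros Hr. destruct Hsol as [_ [_ [Hd _]]]. apply Derive_correct, Hd, Hr. Qed.

Lemma mm_pos : 0 < mm.
Proof. unfold mm; lra. Qed.

Lemma flux_neg r0 : 0 < r0 -> fl r0 < 0.
Proof.
  intros Hr0. apply Rnot_le_lt; intros Hge.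
  destruct w_near0 as [r1 [Hr1 Hr1']].
  set (r2 := r0 / 2).
  assert (Hr2 : 0 < r2) by (unfold r2; lra).
  set (f1 := fl r2).
  assert (Hf1 : 0 < f1).
  { assert (- fl r2 < - fl r0); [|unfold f1; lra].
    apply (mono_lt (fun r => - fl r) (fun r => - (- exp (w r) * Rpower r gamma))). unfold r2; lra.
    intros x Hx. apply D_opp. apply flux_deriv. lra.
    intros x Hx. pose proof (exp_pos (w x)). pose proof (Rpower_pos x gamma). nra. }
  assert (Hlow : forall r, 0 < r <= r2 -> f1 <= fl r).
  { intros r Hr. apply (anti_le fl (fun r => - exp (w r) * Rpower r gamma)). lra.
    intros x Hx. apply flux_deriv. lra.
    intros x Hx. pose proof (exp_pos (w x)). pose proof (Rpower_pos x gamma). nra. }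
  set (a := alpha / mm).
  assert (Ha : 1 < a).
  { unfold a, mm. apply Rmult_lt_reg_r with (beta + 1). lra. unfold Rdiv. rewrite Rmult_assoc, Rinv_l by lra. lra. }
  set (k := Rpower f1 (/ mm)).
  assert (Hk : 0 < k) by apply Rpower_pos.
  assert (Hd : forall r, 0 < r <= r2 -> k * Rpower r (- a) <= Derive w r).
  { intros r Hr. specialize (Hlow r Hr). unfold fl, flux in Hlow.
    set (d := Derive w r) in *.
    assert (Hdp : 0 < d).
    { apply Rnot_le_lt; intros Hd0. pose proof (Rpower_pos (Rabs d) beta). pose proof (Rpower_pos r alpha).
      assert (Rpower (Rabs d) beta * d <= 0) by nra. nra. }
    rewrite Rabs_pos_eq in Hlow by lra.
    replace (Rpower d beta * d) with (Rpower d mm) in Hlow by (unfold mm; rewrite Rpower_plus1; auto).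
    assert (H1 : Rpower f1 (/ mm) <= Rpower (Rpower r alpha * Rpower d mm) (/ mm)).
    { apply Rpower_le_pos. apply Rlt_le, Rinv_0_lt_compat, mm_pos. lra. }
    rewrite Rpower_mult_l in H1 by (apply Rpower_pos).
    rewrite Rpower_inv_pow in H1 by (auto; apply mm_pos). rewrite Rpower_mult in H1.
    fold k in H1. replace (alpha * / mm) with a in H1 by (unfold a; field; apply Rgt_not_eq, mm_pos).
    assert (Hra : Rpower r (- a) * Rpower r a = 1).
    { rewrite <- Rpower_plus. replace (- a + a) with 0 by ring. apply Rpower_O; lra. }
    pose proof (Rpower_pos r (- a)).
    assert (Rpower r (- a) * k <= Rpower r (- a) * (Rpower r a * d)) by (apply Rmult_le_compat_l; lra).
    replace (Rpower r (- a) * (Rpower r a * d)) with ((Rpower r (- a) * Rpower r a) * d) in H0 by ring.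
    rewrite Hra in H0. lra. }
  set (h := fun r => w r + k / (a - 1) * Rpower r (1 - a)).
  assert (Hh : forall r, 0 < r <= r2 -> h r <= h r2).
  { intros r Hr. apply (mono_le h (fun x => Derive w x + k / (a - 1) * ((1 - a) * Rpower x (1 - a - 1)))). lra.
    intros x Hx. unfold h. apply D_plus. apply w_deriv; lra. apply D_scal. apply D_rpow; lra.
    intros x Hx. replace (1 - a - 1) with (- a) by ring.
    replace (k / (a - 1) * ((1 - a) * Rpower x (- a))) with (- (k * Rpower x (- a))) by (field; lra).
    specialize (Hd x ltac:(lra)). lra. }
  set (C := h r2 - rho + 1).
  set (rr := Rmin r1 r2).
  assert (Hrr : 0 < rr) by (unfold rr; apply Rmin_case; lra).
  set (N := Rabs (ln rr) + Rabs C / k).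
  assert (HCk : 0 <= Rabs C / k) by (apply Rmult_le_pos; [apply Rabs_pos|apply Rlt_le, Rinv_0_lt_compat; lra]).
  set (r := exp (- N)).
  assert (Hr : 0 < r) by apply exp_pos.
  assert (Hrrr : r <= rr).
  { unfold r. rewrite <- (exp_ln rr Hrr). apply exp_le. unfold N.
    pose proof (Rle_abs (- ln rr)). rewrite Rabs_Ropp in H. lra. }
  assert (Hrr1 : rr <= r1) by apply Rmin_l. assert (Hrr2 : rr <= r2) by apply Rmin_r.
  specialize (Hh r ltac:(lra)). specialize (Hr1' r ltac:(lra)).
  assert (Hpow : 1 + (a - 1) * N <= Rpower r (1 - a)).
  { unfold r, Rpower. rewrite ln_exp. replace ((1 - a) * - N) with ((a - 1) * N) by ring. apply exp_ineq1_le. }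
  assert (HN : Rabs C <= k * N).
  { unfold N. assert (k * (Rabs C / k) = Rabs C) by (field; lra). pose proof (Rabs_pos (ln rr)). nra. }
  pose proof (Rle_abs C).
  unfold h in Hh.
  assert (k / (a - 1) * (1 + (a - 1) * N) <= k / (a - 1) * Rpower r (1 - a)).
  { apply Rmult_le_compat_l; auto. apply Rlt_le, Rdiv_lt_0_compat; lra. }
  assert (k / (a - 1) * (1 + (a - 1) * N) = k / (a - 1) + k * N) by (field; lra).
  assert (0 < k / (a - 1)) by (apply Rdiv_lt_0_compat; lra).
  unfold C, h in *. lra.
Qed.

Definition th := theta alpha beta gamma.
Definition cc := alpha - beta - 1.
Definition AA := Rpower th (beta + 1) * (alpha - beta - 1).
Definition vv t := w (exp t) - ln AA + th * t.
Definition QQ t := - fl (exp t) * exp (- cc * t).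

Lemma cc_pos : 0 < cc. Proof. unfold cc; lra. Qed.
Lemma AA_pos : 0 < AA. Proof. unfold AA. apply Rmult_lt_0_compat. apply Rpower_pos. lra. Qed.
Lemma QQ_pos t : 0 < QQ t.
Proof. unfold QQ. pose proof (flux_neg (exp t) (exp_pos t)). pose proof (exp_pos (- cc * t)). nra. Qed.

Lemma Rpower_exp t y : Rpower (exp t) y = exp (y * t).
Proof. unfold Rpower. now rewrite ln_exp. Qed.

Lemma P_QQ t : P mm QQ t = - exp t * Derive w (exp t).
Proof.
  unfold P. set (r := exp t). set (d := Derive w r).
  pose proof (flux_neg r (exp_pos t)) as Hneg. unfold fl, flux in Hneg. fold d in Hneg.
  assert (Hd : d < 0).
  { apply Rnot_le_lt; intros Hd0. pose proof (Rpower_pos (Rabs d) beta). pose proof (Rpower_pos r alpha).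
    assert (0 <= Rpower (Rabs d) beta * d) by nra. nra. }
  assert (Hfl : fl r = - (Rpower r alpha * Rpower (- d) mm)).
  { unfold fl, flux. fold d. rewrite Rabs_left by lra. unfold mm. rewrite Rpower_plus1 by lra. ring. }
  unfold QQ. fold r. rewrite Hfl.
  replace (- - (Rpower r alpha * Rpower (- d) mm) * exp (- cc * t))
    with (Rpower r mm * Rpower (- d) mm).
  2:{ unfold r. rewrite !Rpower_exp. unfold mm, cc.
      replace ((beta + 1) * t) with (alpha * t + - (alpha - beta - 1) * t) by ring.
      rewrite exp_plus. ring. }
  rewrite Rpower_mult_l by (unfold r; try apply exp_pos; lra).
  pose proof mm_pos. pose proof (exp_pos t). rewrite (Rpower_inv_pow r mm), (Rpower_inv_pow (- d) mm) by (unfold r in *; lra). ring.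
Qed.

Lemma vv_deriv t : is_derive vv t (th - P mm QQ t).
Proof.
  rewrite P_QQ. unfold vv. eapply D_ext. apply D_plus. apply D_minus.
  apply (D_comp w exp). apply w_deriv, exp_pos. apply D_exp. apply D_const. apply D_scal, D_id.
  ring.
Qed.

Lemma QQ_deriv t : is_derive QQ t (cc * (q0 th mm * exp (vv t) - QQ t)).
Proof.
  unfold QQ. eapply D_ext. apply (D_mult (fun t => - fl (exp t))).
  apply D_opp. apply (D_comp fl exp). apply flux_deriv, exp_pos. apply D_exp.
  apply (D_comp exp (fun t => - cc * t)). apply D_exp. apply D_scal, D_id.
  unfold vv. replace (exp (w (exp t) - ln AA + th * t)) with (exp (w (exp t)) * / AA * exp (th * t)) by (rewrite exp_plus; unfold Rminus; rewrite exp_plus, exp_Ropp, exp_ln by apply AA_pos; ring).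
  rewrite Rpower_exp.
  assert (Hq : cc * q0 th mm = AA) by (unfold cc, q0, mm, AA; ring).
  pose proof AA_pos.
  replace (cc * (q0 th mm * (exp (w (exp t)) * / AA * exp (th * t)) - - fl (exp t) * exp (- cc * t)))
    with ((cc * q0 th mm) * / AA * exp (w (exp t)) * exp (th * t) - cc * (- fl (exp t) * exp (- cc * t))) by ring.
  rewrite Hq, Rinv_r by lra.
  assert (He : exp (th * t) = exp t * exp (gamma * t) * exp (- cc * t))
    by (rewrite <- !exp_plus; f_equal; unfold th, theta, cc; ring).
  rewrite He. ring.
Qed.

Lemma vv_neg : exists t1, forall t, t <= t1 -> vv t < 0.
Proof.
  destruct w_near0 as [r1 [Hr1 Hr1']].
  exists (Rmin (ln r1) ((ln AA - rho - 1) / th - 1)).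
  intros t Ht. assert (H1 : t <= ln r1) by (eapply Rle_trans; [apply Ht|apply Rmin_l]).
  assert (H2 : t <= (ln AA - rho - 1) / th - 1) by (eapply Rle_trans; [apply Ht|apply Rmin_r]).
  assert (exp t <= r1) by (rewrite <- (exp_ln r1 Hr1); apply exp_le; auto).
  specialize (Hr1' (exp t) ltac:(split; [apply exp_pos|auto])).
  unfold vv. fold th in Hth.
  assert (th * t <= ln AA - rho - 1 - th).
  { apply Rmult_le_compat_l with (r := th) in H2; [|lra].
    replace (th * ((ln AA - rho - 1) / th - 1)) with (ln AA - rho - 1 - th) in H2 by (field; lra). lra. }
  lra.
Qed.

Lemma zero_corr s : 0 < s -> (w s = wstar alpha beta gamma s <-> vv (ln s) = 0).
Proof.
  intros Hs. unfold vv, wstar. rewrite exp_ln by auto. fold th. unfold AA. split; intros; lra.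
Qed.

Lemma list_ub (l : list R) : exists M, forall x, In x l -> x <= M.
Proof.
  induction l as [|a l [M HM]]. exists 0; intros x [].
  exists (Rmax a M). intros x [<-|Hx]. apply Rmax_l. eapply Rle_trans; [apply HM, Hx|apply Rmax_r].
Qed.

Lemma main_res : alpha - beta - 1 < 4 * theta alpha beta gamma / (beta + 1) ->
  (forall Rr : R, 0 < Rr ->
     ~ finite_set (fun s => Rr < s /\ w s = wstar alpha beta gamma s) /\
     finite_set (fun s => 0 < s <= Rr /\ w s = wstar alpha beta gamma s)) /\
  ~ finite_set (fun s => 0 < s /\ w s = wstar alpha beta gamma s).
Proof.
  intros Hc4.
  assert (Hosc : cc * mm < 4 * th).
  { unfold cc, mm, th. apply Rmult_lt_compat_r with (r := beta + 1) in Hc4; [|lra].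
    replace (4 * theta alpha beta gamma / (beta + 1) * (beta + 1)) with (4 * theta alpha beta gamma) in Hc4 by (field; lra).
    lra. }
  assert (Hth' : 0 < th) by (unfold th; lra).
  assert (Hm : 1 <= mm) by (unfold mm; lra).
  pose proof cc_pos as Hcc.
  assert (Hinf : forall Rr, 0 < Rr -> ~ finite_set (fun s => Rr < s /\ w s = wstar alpha beta gamma s)).
  { intros Rr HRr [l Hl]. destruct (list_ub l) as [M HM].
    set (T := ln (Rmax Rr M + 1)).
    assert (HRM : 0 < Rmax Rr M + 1) by (pose proof (Rmax_l Rr M); lra).
    destruct (osc th cc mm Hth' Hcc Hm Hosc vv QQ QQ_pos vv_deriv QQ_deriv T) as [t [Ht Hvt]].
    set (s := exp t).
    assert (Hs : Rmax Rr M + 1 < s) by (unfold s, T in *; rewrite <- (exp_ln _ HRM); apply exp_increasing; auto).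
    assert (Hin : In s l).
    { apply Hl. split. pose proof (Rmax_l Rr M); lra.
      apply zero_corr. apply exp_pos. unfold s. rewrite ln_exp. auto. }
    specialize (HM s Hin). pose proof (Rmax_r Rr M). lra. }
  split.
  - intros Rr HRr. split. apply Hinf; auto.
    destruct vv_neg as [t1 Ht1].
    destruct (finite_zeros th cc mm Hth' Hcc Hm vv QQ QQ_pos vv_deriv QQ_deriv t1 Ht1 (ln Rr)) as [l Hl].
    exists (map exp l). intros s [[Hs0 HsR] Hws].
    apply zero_corr in Hws; auto.
    rewrite <- (exp_ln s Hs0). apply in_map. apply Hl; auto. apply ln_le'; auto.
  - intros [l Hl]. apply (Hinf 1 Rlt_0_1). exists l. intros s [Hs Hws]. apply Hl. split; auto; lra.
Qed.

End Main.

Theorem theorem4p1 (alpha beta gamma rho : R) (w : R -> R) :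
  alpha > beta + 1 ->
  beta >= 0 ->
  theta alpha beta gamma > 0 ->
  alpha - beta - 1 < 4 * theta alpha beta gamma / (beta + 1) ->
  is_solution alpha beta gamma rho w ->
  (forall Rr : R, 0 < Rr ->
     ~ finite_set (fun s => Rr < s /\ w s = wstar alpha beta gamma s) /\
     finite_set (fun s => 0 < s <= Rr /\ w s = wstar alpha beta gamma s)) /\
  ~ finite_set (fun s => 0 < s /\ w s = wstar alpha beta gamma s).
Proof.
  intros Hab Hb Hth Hc4 Hsol.
  exact (main_res alpha beta gamma rho w Hab Hb Hth Hsol Hc4).
Qed.
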